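(* Let $k\ge 1$ be an integer and let $G$ be a finite abelian group with primary decomposition $G\cong\bigoplus_i (\mathbb{Z}_{p_i^{r_i}})^{d_i}$, where the pairs $(p_i,r_i)$ (with $p_i$ prime, $r_i\ge 1$) are pairwise distinct and $d_i\ge 1$ is the multiplicity of the cyclic summand $\mathbb{Z}_{p_i^{r_i}}$. Suppose that at least one of the following conditions holds: 1) for every $i$ with $p_i=2$ or $p_i=3$ we have $d_i\ge 2$ (no restriction on $d_i$ for $p_i>3$); 2) no $p_i$ equals $2$, and $k$ is even; 3) for every $i$ with $p_i=2$ we have $d_i\ge 2$, and $k$ is divisible by $4$; 4) for every $i$ with $p_i=2$ we have $d_i\ge 3$, and $k$ is even; 5) for every $i$ with $p_i=2$ we have $d_i\ge 2$ and $d_i\ne 3$, and $k$ is even with $k\ge 4$. Then the restricted wreath product $G\wr\mathbb{Z}^k$ admits an automorphism $\varphi$ with finite Reidemeister number $R(\varphi)<\infty$; that is, $G\wr\mathbb{Z}^k$ does not have the $R_\infty$ property.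
   Context: For a group $\Gamma$ and an automorphism $\varphi:\Gamma\to\Gamma$, the Reidemeister (twisted conjugacy) classes of $\varphi$ are the classes of the equivalence relation $x\sim gx\varphi(g^{-1})$ ($g\in\Gamma$), and the Reidemeister number $R(\varphi)$ is the number of these classes (possibly infinite). A group has the $R_\infty$ property if every automorphism of it has $R(\varphi)=\infty$. The restricted wreath product $G\wr\mathbb{Z}^k$ is the semidirect product $\Sigma\rtimes_\alpha\mathbb{Z}^k$, where $\Sigma=\bigoplus_{x\in\mathbb{Z}^k}G_x$ is the direct sum of copies $G_x\cong G$ and $\mathbb{Z}^k$ acts by shifting indices: $\alpha(x)(g_y)=g_{x+y}$. *)

(* Defs.v *)
From HB Require Import structures.
From mathcomp Require Import all_boot all_order all_algebra.
Set Implicit Arguments. Unset Strict Implicit. Unset Printing Implicit Defensive.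
Import GRing.Theory.
Local Open Scope ring_scope.

Fixpoint cyc_sum (ms : seq nat) : zmodType :=
  match ms with
  | [::] => 'I_1 : zmodType
  | m :: ms' => ('Z_m * cyc_sum ms')%type : zmodType
  end.

(* Primary-decomposition data: a list of triples (p, r, d), standing for the
   summand (Z_{p^r})^d.  The list of cyclic moduli, with multiplicity. *)
Definition pdec_moduli (s : seq (nat * nat * nat)) : seq nat :=
  flatten [seq nseq t.2 (t.1.1 ^ t.1.2)%N | t <- s].

Definition pdec_wf (s : seq (nat * nat * nat)) : Prop :=
  (forall p r d, (p, r, d) \in s -> [/\ prime p, (1 <= r)%N & (1 <= d)%N])
  /\ uniq [seq t.1 | t <- s].

Definition has_pdec (G : zmodType) (s : seq (nat * nat * nat)) : Prop :=
  exists h : G -> cyc_sum (pdec_moduli s),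
    (forall x y, h (x + y) = h x + h y) /\ bijective h.

Definition Zk (k : nat) := 'rV[int]_k.

Section Wreath.
Variables (G : zmodType) (k : nat).

(* Ambient carrier: pairs (f, x) with f : Z^k -> G (f y = component g_y)
   and x in Z^k; the wreath product consists of those with f finitely
   supported. *)
Definition wr := ((Zk k -> G) * Zk k)%type.

Definition fin_supp (f : Zk k -> G) : Prop :=
  exists s : seq (Zk k), forall z, z \notin s -> f z = 0.

Definition in_wr (w : wr) : Prop := fin_supp w.1.

(* Semidirect product law: alpha(x) shifts g_y to g_{x+y}, i.e.
   (alpha(x) f)(z) = f (z - x);  (f,x)(g,y) = (f + alpha(x) g, x + y). *)
Definition wr_mul (a b : wr) : wr :=
  ((fun z => a.1 z + b.1 (z - a.2)), a.2 + b.2).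

Definition wr_one : wr := ((fun _ => 0), 0).

Definition wr_inv (a : wr) : wr :=
  ((fun z => - a.1 (z + a.2)), - a.2).

Definition wr_automorphism (phi : wr -> wr) : Prop :=
  [/\ (forall a, in_wr a -> in_wr (phi a)),
      (forall a b, in_wr a -> in_wr b -> phi (wr_mul a b) = wr_mul (phi a) (phi b)),
      (forall a b, in_wr a -> in_wr b -> phi a = phi b -> a = b)
    & (forall b, in_wr b -> exists2 a, in_wr a & phi a = b)].

Definition twisted_conj (phi : wr -> wr) (x y : wr) : Prop :=
  exists2 g, in_wr g & y = wr_mul (wr_mul g x) (phi (wr_inv g)).

Definition finite_reidemeister (phi : wr -> wr) : Prop :=
  exists n (reps : 'I_n -> wr),
    (forall i, in_wr (reps i)) /\
    (forall x, in_wr x -> exists i, twisted_conj phi x (reps i)).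

End Wreath.

(* Main.v *)
Require Import Defs.
From mathcomp Require Import all_boot all_order all_algebra.
From mathcomp Require Import zify.
From Stdlib Require Import FunctionalExtensionality.
Set Implicit Arguments. Unset Strict Implicit. Unset Printing Implicit Defensive.
Import GRing.Theory.
Local Open Scope ring_scope.

Definition isadd (A B : zmodType) (f : A -> B) := forall x y, f (x + y) = f x + f y.

Section AddLemmas.
Variables (A B : zmodType) (f : A -> B) (hf : isadd f).
Lemma ia0 : f 0 = 0.
Proof. have h := hf 0 0; rewrite addr0 in h. apply: (addrI (f 0)). by rewrite addr0 -h. Qed.
Lemma iaN x : f (- x) = - f x.
Proof. have := hf x (- x); rewrite subrr ia0 => /eqP; rewrite eq_sym addrC addr_eq0. by move/eqP. Qed.
Lemma iaB x y : f (x - y) = f x - f y.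
Proof. by rewrite hf iaN. Qed.
Lemma iaMn x n : f (x *+ n) = f x *+ n.
Proof. elim: n => [|n IH]; first by rewrite !mulr0n ia0. by rewrite !mulrS hf IH. Qed.
Lemma ia_sum (I : Type) (r : seq I) (F : I -> A) : f (\sum_(i <- r) F i) = \sum_(i <- r) f (F i).
Proof. exact: (big_morph f hf ia0). Qed.
End AddLemmas.

Lemma ia_iter (A : zmodType) (f : A -> A) n : isadd f -> isadd (iter n f).
Proof. move=> hf; elim: n => [|n IH] x y //=. by rewrite IH hf. Qed.

Lemma ia_comp (A B C : zmodType) (f : A -> B) (g : B -> C) : isadd f -> isadd g -> isadd (g \o f).
Proof. by move=> hf hg x y /=; rewrite hf hg. Qed.

Lemma pairD (V W : zmodType) (a c : V) (b d : W) : ((a, b) + (c, d) : (V * W)%type) = (a + c, b + d). Proof. by []. Qed.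
Lemma pairN (V W : zmodType) (a : V) (b : W) : (- (a, b) : (V * W)%type) = (- a, - b). Proof. by []. Qed.
Lemma pair0 (V W : zmodType) : (0 : (V * W)%type) = (0, 0). Proof. by []. Qed.
Lemma pairMn (V W : zmodType) (x : (V * W)%type) n : x *+ n = (x.1 *+ n, x.2 *+ n).
Proof. elim: n => [|n IH]; first by rewrite !mulr0n. by rewrite !mulrS IH; case: x IH. Qed.

Definition isoz (A B : zmodType) := exists f : A -> B, isadd f /\ bijective f.

Lemma inv_addf (A B : zmodType) (f : A -> B) (g : B -> A) :
  isadd f -> cancel f g -> cancel g f -> isadd g.
Proof. move=> hf fK gK x y; apply: (can_inj fK); by rewrite hf !gK. Qed.

Definition Good (m : nat) (H : zmodType) :=
  exists psi : H -> H, [/\ isadd psi, (forall x, psi x = 0 -> x = 0)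
                        & (forall x, iter m psi x = x -> x = 0)].

Lemma Good_iso m (A B : zmodType) : isoz A B -> Good m B -> Good m A.
Proof.
case=> f [hf [g fK gK]] [psi [hp k0 fx]].
have hg := inv_addf hf fK gK.
have itE : forall n x, iter n (g \o psi \o f) x = g (iter n psi (f x)).
  elim=> [|n IH] x /=; first by rewrite fK.
  by rewrite IH gK.
exists (g \o psi \o f); split.
- by apply: ia_comp => //; apply: ia_comp.
- move=> x /= h; have: psi (f x) = 0 by rewrite -[psi _]gK h (ia0 hf).
  move/k0 => h2; by rewrite -[x]fK h2 (ia0 hg).
- move=> x; rewrite itE => h.
  have: iter m psi (f x) = f x by rewrite -[iter _ _ _]gK h.
  move/fx => h2; by rewrite -[x]fK h2 (ia0 hg).
Qed.

Lemma Good_prod m (A B : zmodType) : Good m A -> Good m B -> Good m (A * B)%type.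
Proof.
case=> [pa [ha ka fa]] [pb [hb kb fb]].
have itE : forall n (x : (A * B)%type), iter n (fun x => (pa x.1, pb x.2)) x = (iter n pa x.1, iter n pb x.2).
  by elim=> [|n IH] [a b] //=; rewrite IH.
exists (fun x => (pa x.1, pb x.2)); split.
- by case=> a b [c d] /=; rewrite ha hb.
- case=> a b /= [] /ka -> /kb -> //.
- case=> a b; rewrite itE /= => [] [] /fa -> /fb -> //.
Qed.

Lemma unit0 (x : ('I_1 : zmodType)) : x = 0. Proof. by rewrite ord1. Qed.

Lemma Good_unit m : Good m ('I_1 : zmodType).
Proof. exists id; split => // x *; exact: unit0. Qed.

Lemma iso_cat (l1 l2 : seq nat) : isoz (cyc_sum (l1 ++ l2)) (cyc_sum l1 * cyc_sum l2)%type.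
Proof.
elim: l1 => [|a l1 [f [hf [g fK gK]]]] /=.
  exists (fun x => (0, x)); split; first by move=> x y; rewrite pairD addr0.
  exists (fun p => p.2) => // [[u v]] /=; by rewrite (unit0 u).
exists (fun x => ((x.1, (f x.2).1), (f x.2).2)); split.
  by case=> a1 x1 [a2 x2] /=; rewrite hf.
exists (fun p => (p.1.1, g (p.1.2, p.2))).
  by case=> a1 x1 /=; rewrite -surjective_pairing fK.
by case=> [[a1 u] v] /=; rewrite gK.
Qed.

Lemma Good_cat m l1 l2 : Good m (cyc_sum l1) -> Good m (cyc_sum l2) -> Good m (cyc_sum (l1 ++ l2)).
Proof. move=> h1 h2; apply: Good_iso (iso_cat l1 l2) _; exact: Good_prod. Qed.

Lemma Good_nseqD m a b q : Good m (cyc_sum (nseq a q)) -> Good m (cyc_sum (nseq b q)) ->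
  Good m (cyc_sum (nseq (a + b) q)).
Proof. rewrite nseqD; exact: Good_cat. Qed.

Lemma Good_nseqM m a s q : Good m (cyc_sum (nseq a q)) -> Good m (cyc_sum (nseq (a * s) q)).
Proof.
move=> h; elim: s => [|s IH]; first by rewrite muln0; exact: Good_unit.
by rewrite mulnS; apply: Good_nseqD.
Qed.

Lemma Good_nseq1 m d q : Good m ('Z_q : zmodType) -> Good m (cyc_sum (nseq d q)).
Proof. move=> h; elim: d => [|d IH] /=; [exact: Good_unit | exact: Good_prod]. Qed.

Lemma Good_flat m (s : seq (nat * nat * nat)) :
  (forall t, t \in s -> Good m (cyc_sum (nseq t.2 (t.1.1 ^ t.1.2)%N))) ->
  Good m (cyc_sum (pdec_moduli s)).
Proof.
elim: s => [|t s IH] h; first exact: Good_unit.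
rewrite /pdec_moduli /=; apply: Good_cat; first by apply: h; rewrite inE eqxx.
by apply: IH => u hu; apply: h; rewrite inE hu orbT.
Qed.

Lemma Zq_kill (q k : nat) (x : 'Z_q) : (1 < q)%N -> coprime k q -> x *+ k = 0 -> x = 0.
Proof.
move=> q1 cop; have hq := Zp_cast q1.
case: x => xv lt h; apply: val_inj => /=.
move: h; rewrite Zp_mulrn => /(congr1 val) /=.
move: lt; rewrite hq => lt /eqP; rewrite -/(dvdn _ _) Gauss_dvdl; last by rewrite coprime_sym.
move=> dv; apply/eqP; apply: contraTT lt; rewrite -lt0n -leqNgt => pos; exact: dvdn_leq.
Qed.

Lemma iter_opp (V : zmodType) n (x : V) : iter n (fun y => - y) x = if odd n then - x else x.
Proof. elim: n => [|n IH] //=; rewrite IH; case: (odd n) => //=; by rewrite opprK. Qed.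

Lemma Good_neg m q : odd m -> (1 < q)%N -> coprime 2 q -> Good m ('Z_q : zmodType).
Proof.
move=> om q1 c2; exists (fun y => - y); split.
- by move=> x y; rewrite opprD.
- by move=> x /eqP; rewrite oppr_eq0 => /eqP.
- move=> x; rewrite iter_opp om => h; apply: (Zq_kill q1 c2).
  by rewrite mulr2n -{1}h addNr.
Qed.

Lemma Good_two q : (1 < q)%N -> coprime 2 q -> coprime 3 q -> Good 2 ('Z_q : zmodType).
Proof.
move=> q1 c2 c3; exists (fun y => y *+ 2); split.
- by move=> x y; rewrite mulrnDl.
- by move=> x /(Zq_kill q1 c2).
- move=> x /= h; apply: (Zq_kill q1 c3); apply: (addrI x).
  by rewrite addr0 -{3}h -mulrnA -mulrS.
Qed.

Fixpoint pw (n : nat) (V : zmodType) : zmodType :=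
  match n with 0 => 'I_1 : zmodType | n'.+1 => (V * pw n' V)%type : zmodType end.

Fixpoint map_pw n (V W : zmodType) (f : V -> W) : pw n V -> pw n W :=
  match n return pw n V -> pw n W with
  | 0 => fun x => x
  | n'.+1 => fun x => (f x.1, @map_pw n' V W f x.2)
  end.
Arguments map_pw n [V W] f _.

Lemma map_pw_inj n (V W : zmodType) (f : V -> W) : injective f -> injective (map_pw n f).
Proof.
move=> fi; elim: n => [|n IH] //= [a x] [b y] /= [] /fi -> /IH -> //.
Qed.

Lemma map_pw0 n (V W : zmodType) (f : V -> W) : f 0 = 0 -> map_pw n f 0 = 0.
Proof. by move=> f0; elim: n => [|n IH] //=; rewrite f0 IH. Qed.

Lemma torsion_red (W : zmodType) (p r : nat) (chi : W -> W) :
  (forall x : W, x *+ (p ^ r) = 0) -> isadd chi ->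
  (forall y, y *+ p = 0 -> chi y = 0 -> y = 0) ->
  forall x, chi x = 0 -> x = 0.
Proof.
move=> hq hc hy x cx.
have ex : exists s, x *+ (p ^ s) == 0 by exists r; rewrite hq.
case: (ex_minnP ex) => s /eqP hs hmin.
case: s hs hmin => [|s] hs hmin; first by rewrite expn0 mulr1n in hs.
have : x *+ (p ^ s) = 0.
  apply: hy; first by rewrite -mulrnA -expnSr.
  by rewrite (iaMn hc) cx mul0rn.
move/eqP/hmin; by rewrite ltnn.
Qed.

Lemma pw_mulrn n (V : zmodType) (k : nat) : (forall v : V, v *+ k = 0) -> forall x : pw n V, x *+ k = 0.
Proof.
move=> hv; elim: n => [|n IH] x /=; first exact: unit0.
by rewrite pairMn hv IH.
Qed.

Section Iota.
Variables (p r : nat) (pp : prime p) (r0 : (0 < r)%N).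
Let p1 : (1 < p)%N := prime_gt1 pp.
Let q1 : (1 < p ^ r)%N.
Proof. by case: r r0 => // r' _; rewrite expnS (leq_trans p1) // leq_pmulr // expn_gt0 ltnW. Qed.

Definition embq (c : 'Z_p) : 'Z_(p ^ r) := ((p ^ r.-1)%N%:R : 'Z_(p ^ r)) *+ (c : nat).

Lemma eP : ((p ^ r.-1)%N%:R : 'Z_(p ^ r)) *+ p = 0.
Proof. by rewrite -mulrnA -expnSr prednK // pchar_Zp. Qed.

Lemma embq_mod n : ((p ^ r.-1)%N%:R : 'Z_(p ^ r)) *+ (n %% p) = (p ^ r.-1)%N%:R *+ n.
Proof. by rewrite {2}(divn_eq n p) mulrnDr mulnC mulrnA eP mul0rn add0r. Qed.

Lemma embq_add : isadd embq.
Proof.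
move=> a b; rewrite /embq -mulrnDr -[in RHS]embq_mod; congr (_ *+ _).
exact: (congr1 (modn (a + b)) (Zp_cast p1)).
Qed.

Lemma embq_inj : injective embq.
Proof.
have k0 : forall c, embq c = 0 -> c = 0.
  case=> c lt; rewrite /embq /= -mulrnA => /(congr1 val); rewrite /= val_Zp_nat // => h.
  apply: val_inj => /=; move: lt; rewrite Zp_cast // => lt.
  move: h; rewrite modn_small; last first.
    by rewrite -{2}(prednK r0) expnS mulnC ltn_pmul2r // expn_gt0 prime_gt0.
  by move/eqP; rewrite muln_eq0 expn_eq0 (gtn_eqF (prime_gt0 pp)) /= => /eqP.
move=> a b h; apply/eqP; rewrite -subr_eq0; apply/eqP/k0.
by rewrite (iaB embq_add) h subrr.
Qed.

Lemma embq_tors (y : 'Z_(p ^ r)) : y *+ p = 0 -> exists c, y = embq c.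
Proof.
have qE := Zp_cast q1.
case: y => yv lt; rewrite Zp_mulrn => /(congr1 val) /=.
have lt' : (yv < p ^ r)%N by rewrite -qE.
move=> /eqP h; rewrite qE -/(dvdn _ _) in h.
move: h; rewrite -{1}(prednK r0) expnSr dvdn_pmul2r ?prime_gt0 // => dv.
exists (inZp (yv %/ p ^ r.-1)).
rewrite /embq /= -mulrnA.
have -> : ((yv %/ p ^ r.-1) %% (Zp_trunc p).+2)%N = (yv %/ p ^ r.-1)%N.
  rewrite Zp_cast // modn_small // ltn_divLR ?expn_gt0 ?prime_gt0 //.
  by rewrite -expnS prednK.
rewrite mulnC divnK //.
by apply: val_inj; rewrite /= val_Zp_nat // modn_small.
Qed.
End Iota.
Arguments embq p r c : clear implicits.


Lemma pw_tors n p r : prime p -> (0 < r)%N -> forall y : pw n 'Z_(p ^ r),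
  y *+ p = 0 -> exists c : pw n 'Z_p, y = map_pw n (embq p r) c.
Proof.
move=> pp r0; elim: n => [|n IH] y; first by exists y.
case: y => a b; rewrite pairMn /= => -[] /(embq_tors pp r0) [c ->] /IH [d ->].
by exists (c, d).
Qed.

Lemma pr_gt1 p r : prime p -> (0 < r)%N -> (1 < p ^ r)%N.
Proof.
by move=> pp; case: r => // r' _; rewrite expnS (leq_trans (prime_gt1 pp)) // leq_pmulr // expn_gt0 prime_gt0.
Qed.

Lemma Zq_char p r (v : 'Z_(p ^ r)) : prime p -> (0 < r)%N -> v *+ (p ^ r) = 0.
Proof. by move=> pp r0; rewrite -mulr_natr pchar_Zp ?mulr0 // pr_gt1. Qed.

Lemma block_good n m p (psi : forall V : zmodType, pw n V -> pw n V) :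
  prime p ->
  (forall V, isadd (psi V)) ->
  (forall (V W : zmodType) (f : V -> W), isadd f -> forall x, psi W (map_pw n f x) = map_pw n f (psi V x)) ->
  (forall c : pw n 'Z_p, psi _ c = 0 -> c = 0) ->
  (forall c : pw n 'Z_p, iter m (psi _) c = c -> c = 0) ->
  forall r, (0 < r)%N -> Good m (pw n 'Z_(p ^ r)).
Proof.
move=> pp hadd hcom hk hf r r0.
have hq : forall x : pw n 'Z_(p ^ r), x *+ (p ^ r) = 0.
  by apply: pw_mulrn => v; apply: Zq_char.
have ia := embq_add pp r0.
have mi := map_pw_inj (n:=n) (embq_inj pp r0).
have m0 := map_pw0 n (ia0 ia).
have ci : forall j c, iter j (psi _) (map_pw n (embq p r) c) = map_pw n (embq p r) (iter j (psi _) c).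
  by elim=> [|j IH] c //=; rewrite IH hcom.
exists (psi _); split; first exact: hadd.
  apply: (torsion_red hq (hadd _)) => y /(pw_tors pp r0) [c ->].
  by rewrite hcom // -m0 => /mi /hk ->.
move=> x hx.
have hchi : isadd (fun x => iter m (psi 'Z_(p ^ r)) x - x).
  by move=> u v; rewrite (ia_iter _ (hadd _)) opprD addrACA.
apply: (torsion_red hq hchi); last by rewrite hx subrr.
move=> y /(pw_tors pp r0) [c ->] /eqP; rewrite subr_eq0 => /eqP.
by rewrite ci => /mi /hf ->; exact: m0.
Qed.

Definition psi2 (V : zmodType) (x : pw 2 V) : pw 2 V := (- x.2.1, (x.1 - x.2.1 *+ 3, x.2.2)).
Definition psi3 (V : zmodType) (x : pw 3 V) : pw 3 V := (x.2.2.1, (x.1 + x.2.2.1, (x.2.1, x.2.2.2))).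
Definition psi4 (V : zmodType) (x : pw 4 V) : pw 4 V :=
  (- x.2.2.2.1, (x.1 - x.2.2.2.1, (x.2.1 - x.2.2.2.1, (x.2.2.1 - x.2.2.2.1, x.2.2.2.2)))).
Definition psi5 (V : zmodType) (x : pw 5 V) : pw 5 V :=
  (- x.2.2.2.2.1, (x.1, (x.2.1 - x.2.2.2.2.1, (x.2.2.1, (x.2.2.2.1, x.2.2.2.2.2))))).

Ltac addc := first [ done | by rewrite ?mulrnDl ?opprD | by rewrite ?mulrnDl ?opprD addrACA].

Lemma psi2_add V : isadd (@psi2 V).
Proof. case=> a [b u] [a' [b' u']]; rewrite /psi2 /= !pairD; congr (_, (_, _)); addc. Qed.
Lemma psi3_add V : isadd (@psi3 V).
Proof. case=> a [b [c u]] [a' [b' [c' u']]]; rewrite /psi3 /= !pairD; congr (_, (_, (_, _))); addc. Qed.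
Lemma psi4_add V : isadd (@psi4 V).
Proof. case=> a [b [c [d u]]] [a' [b' [c' [d' u']]]]; rewrite /psi4 /= !pairD; congr (_, (_, (_, (_, _)))); addc. Qed.
Lemma psi5_add V : isadd (@psi5 V).
Proof. case=> a [b [c [d [e u]]]] [a' [b' [c' [d' [e' u']]]]]; rewrite /psi5 /= !pairD; congr (_, (_, (_, (_, (_, _))))); addc. Qed.

Ltac comtac hf := rewrite /=; by rewrite ?hf ?(iaN hf) ?(iaMn hf).

Lemma psi2_com (V W : zmodType) (f : V -> W) : isadd f -> forall x, psi2 (map_pw 2 f x) = map_pw 2 f (psi2 x).
Proof. move=> hf [a [b u]]; comtac hf. Qed.
Lemma psi3_com (V W : zmodType) (f : V -> W) : isadd f -> forall x, psi3 (map_pw 3 f x) = map_pw 3 f (psi3 x).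
Proof. move=> hf [a [b [c u]]]; comtac hf. Qed.
Lemma psi4_com (V W : zmodType) (f : V -> W) : isadd f -> forall x, psi4 (map_pw 4 f x) = map_pw 4 f (psi4 x).
Proof. move=> hf [a [b [c [d u]]]]; comtac hf. Qed.
Lemma psi5_com (V W : zmodType) (f : V -> W) : isadd f -> forall x, psi5 (map_pw 5 f x) = map_pw 5 f (psi5 x).
Proof. move=> hf [a [b [c [d [e u]]]]]; comtac hf. Qed.

Fixpoint Lp (V : zmodType) (s : seq V) n : seq (pw n V) :=
  match n return seq (pw n V) with
  | 0 => [:: (0 : 'I_1)]
  | n'.+1 => [seq (a, x) | a <- s, x <- @Lp V s n']
  end.

Lemma mem_Lp (V : zmodType) (s : seq V) n : (forall a, a \in s) -> forall c : pw n V, c \in Lp s n.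
Proof.
move=> hs; elim: n => [|n IH] c /=; first by rewrite inE (unit0 c).
case: c => a x; exact: allpairs_f.
Qed.

Definition Z2s : seq 'Z_2 := [:: 0; 1].
Definition Z3s : seq 'Z_3 := [:: 0; 1; 2].
Lemma memZ2 a : a \in Z2s. Proof. by case: a => [[|[|[]]] ?]. Qed.
Lemma memZ3 a : a \in Z3s. Proof. by case: a => [[|[|[|[]]]] ?]. Qed.

Lemma t5 : all (fun c => (iter 35 (@psi5 'Z_2) c == c) ==> (c == 0)) (Lp Z2s 5).
Proof. by vm_compute. Qed.

Lemma chk_fix (V : zmodType) (s : seq V) n (f : pw n V -> pw n V) m : (forall a, a \in s) ->
  all (fun c => (iter m f c == c) ==> (c == 0)) (Lp s n) -> forall c, iter m f c = c -> c = 0.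
Proof. by move=> hs /allP h c hc; apply/eqP; move: (h c (@mem_Lp V s n hs c)); rewrite hc eqxx. Qed.

Lemma chk_ker (V : zmodType) (s : seq V) n (f : pw n V -> pw n V) : (forall a, a \in s) ->
  all (fun c => (f c == 0) ==> (c == 0)) (Lp s n) -> forall c, f c = 0 -> c = 0.
Proof. by move=> hs /allP h c hc; apply/eqP; move: (h c (@mem_Lp V s n hs c)); rewrite hc eqxx. Qed.

Ltac blk n m p ps psa psc mem r r0 := apply: (@block_good n m p (fun V => @ps V) isT psa psc _ _ r r0);
  [ apply: (chk_ker mem); by vm_compute | apply: (chk_fix mem); by vm_compute ].

Lemma GB2 p m r : (0 < r)%N -> ((p == 2%N) && (m \in [:: 2; 5; 35]%N)) || ((p == 3%N) && (m == 2%N)) ->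
  Good m (cyc_sum (nseq 2 (p ^ r)%N)).
Proof.
move=> r0 /orP [/andP [/eqP -> ] | /andP [/eqP -> /eqP ->]].
  rewrite !inE => /or3P [] /eqP ->; [blk 2%N 2%N 2%N psi2 psi2_add psi2_com memZ2 r r0 | blk 2%N 5%N 2%N psi2 psi2_add psi2_com memZ2 r r0 | blk 2%N 35%N 2%N psi2 psi2_add psi2_com memZ2 r r0].
blk 2%N 2%N 3%N psi2 psi2_add psi2_com memZ3 r r0.
Qed.

Lemma GB3 p m r : (0 < r)%N -> ((p == 2%N) && (m \in [:: 2; 3; 5]%N)) || ((p == 3%N) && (m == 2%N)) ->
  Good m (cyc_sum (nseq 3 (p ^ r)%N)).
Proof.
move=> r0 /orP [/andP [/eqP -> ] | /andP [/eqP -> /eqP ->]].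
  rewrite !inE => /or3P [] /eqP ->; [blk 3%N 2%N 2%N psi3 psi3_add psi3_com memZ2 r r0 | blk 3%N 3%N 2%N psi3 psi3_add psi3_com memZ2 r r0 | blk 3%N 5%N 2%N psi3 psi3_add psi3_com memZ2 r r0].
blk 3%N 2%N 3%N psi3 psi3_add psi3_com memZ3 r r0.
Qed.

Lemma GB4 r : (0 < r)%N -> Good 3 (cyc_sum (nseq 4 (2 ^ r)%N)).
Proof. move=> r0; blk 4%N 3%N 2%N psi4 psi4_add psi4_com memZ2 r r0. Qed.

Lemma GB5 m r : (0 < r)%N -> m \in [:: 3; 35]%N -> Good m (cyc_sum (nseq 5 (2 ^ r)%N)).
Proof. move=> r0; rewrite !inE => /orP [] /eqP ->; [blk 5%N 3%N 2%N psi5 psi5_add psi5_com memZ2 r r0 | blk 5%N 35%N 2%N psi5 psi5_add psi5_com memZ2 r r0]. Qed.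

Fixpoint sumit (A : zmodType) (L : A -> A) n x := match n with 0 => 0 | n'.+1 => x + L (sumit L n' x) end.

Lemma pair_eq (V W : Type) (a c : V) (b d : W) : a = c -> b = d -> (a, b) = (c, d).
Proof. by move=> -> ->. Qed.
Lemma pair_eq0 (V W : zmodType) (a : V) (b : W) : a = 0 -> b = 0 -> ((a, b) : (V * W)%type) = 0.
Proof. by move=> -> ->. Qed.

Ltac tupeq := lazymatch goal with |- (_, _) = (_, _) => apply: pair_eq; [lia | tupeq] | _ => first [reflexivity | exact: unit0] end.
Ltac tupeq0 := lazymatch goal with |- (_, _) = _ => apply: pair_eq0; [lia | tupeq0] | _ => exact: unit0 end.

Definition L3 (x : pw 2 int) : pw 2 int := (- x.2.1, (x.1 - x.2.1, x.2.2)).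
Definition L3' (x : pw 2 int) : pw 2 int := (x.2.1 - x.1, (- x.1, x.2.2)).
Definition L5 (x : pw 4 int) : pw 4 int :=
  (- x.2.2.2.1, (x.1 - x.2.2.2.1, (x.2.1 - x.2.2.2.1, (x.2.2.1 - x.2.2.2.1, x.2.2.2.2)))).
Definition L5' (x : pw 4 int) : pw 4 int :=
  (x.2.1 - x.1, (x.2.2.1 - x.1, (x.2.2.2.1 - x.1, (- x.1, x.2.2.2.2)))).
Definition L7 (x : pw 6 int) : pw 6 int :=
  let a5 := x.2.2.2.2.2.1 in
  (- a5, (x.1 - a5, (x.2.1 - a5, (x.2.2.1 - a5, (x.2.2.2.1 - a5, (x.2.2.2.2.1 - a5, x.2.2.2.2.2.2)))))).
Definition L7' (x : pw 6 int) : pw 6 int :=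
  let b0 := x.1 in
  (x.2.1 - b0, (x.2.2.1 - b0, (x.2.2.2.1 - b0, (x.2.2.2.2.1 - b0, (x.2.2.2.2.2.1 - b0, (- b0, x.2.2.2.2.2.2)))))).

Arguments L3 : simpl never.
Arguments L3' : simpl never.
Arguments L5 : simpl never.
Arguments L5' : simpl never.
Arguments L7 : simpl never.
Arguments L7' : simpl never.


Lemma L3_add : isadd L3. Proof. case=> a [b u] [a' [b' u']]; rewrite /L3 /= !pairD; tupeq. Qed.
Lemma L3'_add : isadd L3'. Proof. case=> a [b u] [a' [b' u']]; rewrite /L3' /= !pairD; tupeq. Qed.
Lemma L5_add : isadd L5. Proof. case=> a [b [c [d u]]] [a' [b' [c' [d' u']]]]; rewrite /L5 /= !pairD; tupeq. Qed.
Lemma L5'_add : isadd L5'. Proof. case=> a [b [c [d u]]] [a' [b' [c' [d' u']]]]; rewrite /L5' /= !pairD; tupeq. Qed.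
Lemma L7_add : isadd L7.
Proof. case=> a [b [c [d [e [f u]]]]] [a' [b' [c' [d' [e' [f' u']]]]]]; rewrite /L7 /= !pairD; tupeq. Qed.
Lemma L7'_add : isadd L7'.
Proof. case=> a [b [c [d [e [f u]]]]] [a' [b' [c' [d' [e' [f' u']]]]]]; rewrite /L7' /= !pairD; tupeq. Qed.

Lemma L3K : cancel L3 L3'. Proof. case=> a [b u]; rewrite /L3 /L3' /=; tupeq. Qed.
Lemma L3'K : cancel L3' L3. Proof. case=> a [b u]; rewrite /L3 /L3' /=; tupeq. Qed.
Lemma L5K : cancel L5 L5'. Proof. case=> a [b [c [d u]]]; rewrite /L5 /L5' /=; tupeq. Qed.
Lemma L5'K : cancel L5' L5. Proof. case=> a [b [c [d u]]]; rewrite /L5 /L5' /=; tupeq. Qed.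
Lemma L7K : cancel L7 L7'. Proof. case=> a [b [c [d [e [f u]]]]]; rewrite /L7 /L7' /=; tupeq. Qed.
Lemma L7'K : cancel L7' L7. Proof. case=> a [b [c [d [e [f u]]]]]; rewrite /L7 /L7' /=; tupeq. Qed.


Lemma sumitS' (A : zmodType) (L : A -> A) n x : isadd L -> sumit L n.+1 x = sumit L n x + iter n L x.
Proof.
move=> hL; elim: n => [|n IH]; first by rewrite /= (ia0 hL) addr0 add0r.
by rewrite -[sumit L n.+2 x]/(x + L (sumit L n.+1 x)) [in LHS]IH hL addrA.
Qed.

Lemma L3s x : sumit L3 3 x = 0.
Proof.
case: x => a [b u].
have s1 : L3 ((a), ((b), u)) = ((- b), ((a - b), u)) by rewrite /L3 /=; tupeq.
have s2 : L3 ((- b), ((a - b), u)) = ((- a + b), ((- a), u)) by rewrite /L3 /=; tupeq.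
rewrite !(sumitS' _ _ L3_add) /= add0r s1 s2 !pairD /=; tupeq0.
Qed.

Lemma L3's x : sumit L3' 3 x = 0.
Proof.
case: x => a [b u].
have s1 : L3' ((a), ((b), u)) = ((- a + b), ((- a), u)) by rewrite /L3' /=; tupeq.
have s2 : L3' ((- a + b), ((- a), u)) = ((- b), ((a - b), u)) by rewrite /L3' /=; tupeq.
rewrite !(sumitS' _ _ L3'_add) /= add0r s1 s2 !pairD /=; tupeq0.
Qed.

Lemma L5s x : sumit L5 5 x = 0.
Proof.
case: x => a [b [c [d u]]].
have s1 : L5 ((a), ((b), ((c), ((d), u)))) = ((- d), ((a - d), ((b - d), ((c - d), u)))) by rewrite /L5 /=; tupeq.
have s2 : L5 ((- d), ((a - d), ((b - d), ((c - d), u)))) = ((- c + d), ((- c), ((a - c), ((b - c), u)))) by rewrite /L5 /=; tupeq.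
have s3 : L5 ((- c + d), ((- c), ((a - c), ((b - c), u)))) = ((- b + c), ((- b + d), ((- b), ((a - b), u)))) by rewrite /L5 /=; tupeq.
have s4 : L5 ((- b + c), ((- b + d), ((- b), ((a - b), u)))) = ((- a + b), ((- a + c), ((- a + d), ((- a), u)))) by rewrite /L5 /=; tupeq.
rewrite !(sumitS' _ _ L5_add) /= add0r s1 s2 s3 s4 !pairD /=; tupeq0.
Qed.

Lemma L5's x : sumit L5' 5 x = 0.
Proof.
case: x => a [b [c [d u]]].
have s1 : L5' ((a), ((b), ((c), ((d), u)))) = ((- a + b), ((- a + c), ((- a + d), ((- a), u)))) by rewrite /L5' /=; tupeq.
have s2 : L5' ((- a + b), ((- a + c), ((- a + d), ((- a), u)))) = ((- b + c), ((- b + d), ((- b), ((a - b), u)))) by rewrite /L5' /=; tupeq.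
have s3 : L5' ((- b + c), ((- b + d), ((- b), ((a - b), u)))) = ((- c + d), ((- c), ((a - c), ((b - c), u)))) by rewrite /L5' /=; tupeq.
have s4 : L5' ((- c + d), ((- c), ((a - c), ((b - c), u)))) = ((- d), ((a - d), ((b - d), ((c - d), u)))) by rewrite /L5' /=; tupeq.
rewrite !(sumitS' _ _ L5'_add) /= add0r s1 s2 s3 s4 !pairD /=; tupeq0.
Qed.

Lemma L7s x : sumit L7 7 x = 0.
Proof.
case: x => a [b [c [d [e [f u]]]]].
have s1 : L7 ((a), ((b), ((c), ((d), ((e), ((f), u)))))) = ((- f), ((a - f), ((b - f), ((c - f), ((d - f), ((e - f), u)))))) by rewrite /L7 /=; tupeq.
have s2 : L7 ((- f), ((a - f), ((b - f), ((c - f), ((d - f), ((e - f), u)))))) = ((- e + f), ((- e), ((a - e), ((b - e), ((c - e), ((d - e), u)))))) by rewrite /L7 /=; tupeq.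
have s3 : L7 ((- e + f), ((- e), ((a - e), ((b - e), ((c - e), ((d - e), u)))))) = ((- d + e), ((- d + f), ((- d), ((a - d), ((b - d), ((c - d), u)))))) by rewrite /L7 /=; tupeq.
have s4 : L7 ((- d + e), ((- d + f), ((- d), ((a - d), ((b - d), ((c - d), u)))))) = ((- c + d), ((- c + e), ((- c + f), ((- c), ((a - c), ((b - c), u)))))) by rewrite /L7 /=; tupeq.
have s5 : L7 ((- c + d), ((- c + e), ((- c + f), ((- c), ((a - c), ((b - c), u)))))) = ((- b + c), ((- b + d), ((- b + e), ((- b + f), ((- b), ((a - b), u)))))) by rewrite /L7 /=; tupeq.
have s6 : L7 ((- b + c), ((- b + d), ((- b + e), ((- b + f), ((- b), ((a - b), u)))))) = ((- a + b), ((- a + c), ((- a + d), ((- a + e), ((- a + f), ((- a), u)))))) by rewrite /L7 /=; tupeq.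
rewrite !(sumitS' _ _ L7_add) /= add0r s1 s2 s3 s4 s5 s6 !pairD /=; tupeq0.
Qed.

Lemma L7's x : sumit L7' 7 x = 0.
Proof.
case: x => a [b [c [d [e [f u]]]]].
have s1 : L7' ((a), ((b), ((c), ((d), ((e), ((f), u)))))) = ((- a + b), ((- a + c), ((- a + d), ((- a + e), ((- a + f), ((- a), u)))))) by rewrite /L7' /=; tupeq.
have s2 : L7' ((- a + b), ((- a + c), ((- a + d), ((- a + e), ((- a + f), ((- a), u)))))) = ((- b + c), ((- b + d), ((- b + e), ((- b + f), ((- b), ((a - b), u)))))) by rewrite /L7' /=; tupeq.
have s3 : L7' ((- b + c), ((- b + d), ((- b + e), ((- b + f), ((- b), ((a - b), u)))))) = ((- c + d), ((- c + e), ((- c + f), ((- c), ((a - c), ((b - c), u)))))) by rewrite /L7' /=; tupeq.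
have s4 : L7' ((- c + d), ((- c + e), ((- c + f), ((- c), ((a - c), ((b - c), u)))))) = ((- d + e), ((- d + f), ((- d), ((a - d), ((b - d), ((c - d), u)))))) by rewrite /L7' /=; tupeq.
have s5 : L7' ((- d + e), ((- d + f), ((- d), ((a - d), ((b - d), ((c - d), u)))))) = ((- e + f), ((- e), ((a - e), ((b - e), ((c - e), ((d - e), u)))))) by rewrite /L7' /=; tupeq.
have s6 : L7' ((- e + f), ((- e), ((a - e), ((b - e), ((c - e), ((d - e), u)))))) = ((- f), ((a - f), ((b - f), ((c - f), ((d - f), ((e - f), u)))))) by rewrite /L7' /=; tupeq.
rewrite !(sumitS' _ _ L7'_add) /= add0r s1 s2 s3 s4 s5 s6 !pairD /=; tupeq0.
Qed.


Definition GoodL (m : nat) (A : zmodType) :=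
  exists L L' : A -> A, [/\ isadd L, isadd L', cancel L L' & cancel L' L] /\
    (forall x, sumit L m x = 0) /\ (forall x, sumit L' m x = 0).

Lemma sumit_conj (A B : zmodType) (f : A -> B) (g : B -> A) (L : B -> B) n x :
  isadd g -> cancel f g -> cancel g f -> sumit (g \o L \o f) n x = g (sumit L n (f x)).
Proof.
move=> hg fK gK; elim: n => [|n IH] /=; first by rewrite (ia0 hg).
by rewrite IH hg fK gK.
Qed.

Lemma GoodL_iso m (A B : zmodType) : isoz A B -> GoodL m B -> GoodL m A.
Proof.
case=> f [hf [g fK gK]] [L [L' [[hL hL' LK L'K] [s1 s2]]]].
have hg := inv_addf hf fK gK.
exists (g \o L \o f), (g \o L' \o f); split; first split.
- by apply: ia_comp => //; apply: ia_comp.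
- by apply: ia_comp => //; apply: ia_comp.
- by move=> x /=; rewrite gK LK fK.
- by move=> x /=; rewrite gK L'K fK.
by split=> x; rewrite sumit_conj // ?s1 ?s2 (ia0 hg).
Qed.

Lemma sumit_prod (A B : zmodType) (L1 : A -> A) (L2 : B -> B) n (x : (A * B)%type) :
  sumit (fun y : (A * B)%type => (L1 y.1, L2 y.2)) n x = (sumit L1 n x.1, sumit L2 n x.2).
Proof. case: x => a b; elim: n => [|n IH] //=; by rewrite IH. Qed.

Lemma GoodL_prod m (A B : zmodType) : GoodL m A -> GoodL m B -> GoodL m (A * B)%type.
Proof.
case=> [L1 [L1' [[h1 h1' K1 K1'] [s1 s1']]]] [L2 [L2' [[h2 h2' K2 K2'] [s2 s2']]]].
exists (fun y => (L1 y.1, L2 y.2)), (fun y => (L1' y.1, L2' y.2)); split; first split.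
- by case=> a b [c d] /=; rewrite h1 h2.
- by case=> a b [c d] /=; rewrite h1' h2'.
- by case=> a b /=; rewrite K1 K2.
- by case=> a b /=; rewrite K1' K2'.
by split=> x; rewrite sumit_prod ?s1 ?s2 ?s1' ?s2'.
Qed.

Lemma GoodL_unit m : GoodL m ('I_1 : zmodType).
Proof.
exists id, id; split; first by split.
by split=> x; apply: unit0.
Qed.

Lemma iso_pwD a b (V : zmodType) : isoz (pw (a + b) V) (pw a V * pw b V)%type.
Proof.
elim: a => [|a [f [hf [g fK gK]]]] /=.
  exists (fun x => (0, x)); split; first by move=> x y; rewrite pairD addr0.
  exists (fun p => p.2) => // [[u v]] /=; by rewrite (unit0 u).
exists (fun x => ((x.1, (f x.2).1), (f x.2).2)); split.
  by case=> a1 x1 [a2 x2] /=; rewrite hf.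
exists (fun p => (p.1.1, g (p.1.2, p.2))).
  by case=> a1 x1 /=; rewrite -surjective_pairing fK.
by case=> [[a1 u] v] /=; rewrite gK.
Qed.

Lemma GoodL_pwD m a b : GoodL m (pw a int) -> GoodL m (pw b int) -> GoodL m (pw (a + b) int).
Proof. move=> h1 h2; apply: GoodL_iso (iso_pwD a b int) _; exact: GoodL_prod. Qed.

Lemma GoodL_pwM m a s : GoodL m (pw a int) -> GoodL m (pw (a * s) int).
Proof.
move=> h; elim: s => [|s IH]; first by rewrite muln0; exact: GoodL_unit.
by rewrite mulnS; apply: GoodL_pwD.
Qed.

Lemma sumit_add (A : zmodType) (L : A -> A) a b x : isadd L ->
  sumit L (a + b) x = sumit L a x + iter a L (sumit L b x).
Proof.
move=> hL; elim: a => [|a IH] /=; first by rewrite add0r.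
by rewrite IH hL addrA.
Qed.

Lemma sumit_iter (A : zmodType) (L : A -> A) m : isadd L -> (forall x, sumit L m x = 0) ->
  forall x, iter m L x = x.
Proof.
move=> hL hs x; have := sumitS' m x hL.
rewrite -[sumit L m.+1 x]/(x + L (sumit L m x)) hs (ia0 hL) addr0 add0r.
by move/esym.
Qed.

Lemma sumit_mul (A : zmodType) (L : A -> A) m t : isadd L -> (forall x, sumit L m x = 0) ->
  forall x, sumit L (m * t) x = 0.
Proof.
move=> hL hs x; elim: t => [|t IH]; first by rewrite muln0.
by rewrite mulnS sumit_add // hs IH add0r (ia0 (ia_iter _ hL)).
Qed.

Lemma GoodL_scale m t (A : zmodType) : GoodL m A -> GoodL (m * t) A.
Proof.
case=> [L [L' [[h h' K K'] [s s']]]]; exists L, L'; split; first by split.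
by split; apply: sumit_mul.
Qed.

Lemma GoodL2 (A : zmodType) : GoodL 2 A.
Proof.
exists (fun x => - x), (fun x => - x); split; first split.
- by move=> x y; rewrite opprD.
- by move=> x y; rewrite opprD.
- exact: opprK.
- exact: opprK.
by split=> x /=; rewrite oppr0 addr0 subrr.
Qed.

Lemma iso_rv n : isoz 'rV[int]_n (pw n int).
Proof.
elim: n => [|n [F [hF [G FK GK]]]].
  exists (fun _ => (0 : 'I_1)); split; first by move=> *; rewrite addr0.
  by exists (fun _ => 0) => [v|u]; [rewrite (thinmx0 v) | rewrite (unit0 u)].
exists (fun v : 'rV[int]_(1 + n) => ((lsubmx v) 0 0, F (rsubmx v))); split.
  by move=> x y; rewrite !raddfD /= hF mxE.
exists (fun p : (int * pw n int)%type => (row_mx (p.1%:M) (G p.2) : 'rV[int]_(1 + n))).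
  by move=> v /=; rewrite FK -mx11_scalar hsubmxK.
by case=> a w /=; rewrite row_mxKl row_mxKr GK mxE eqxx mulr1n.
Qed.

Lemma GZ_from n m : GoodL m (pw n int) -> GoodL m (Zk n).
Proof. exact: GoodL_iso (iso_rv n). Qed.

Lemma GL3 : GoodL 3 (pw 2 int).
Proof. by exists L3, L3'; split; [split; [exact: L3_add|exact: L3'_add|exact: L3K|exact: L3'K] | split; [exact: L3s|exact: L3's]]. Qed.
Lemma GL5 : GoodL 5 (pw 4 int).
Proof. by exists L5, L5'; split; [split; [exact: L5_add|exact: L5'_add|exact: L5K|exact: L5'K] | split; [exact: L5s|exact: L5's]]. Qed.
Lemma GL7 : GoodL 7 (pw 6 int).
Proof. by exists L7, L7'; split; [split; [exact: L7_add|exact: L7'_add|exact: L7K|exact: L7'K] | split; [exact: L7s|exact: L7's]]. Qed.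

Lemma GZ3 j : GoodL 3 (Zk (2 * j)).
Proof. apply: GZ_from; exact: GoodL_pwM GL3. Qed.
Lemma GZ5 j : GoodL 5 (Zk (4 * j)).
Proof. apply: GZ_from; exact: GoodL_pwM GL5. Qed.
Lemma GZ35 j : GoodL 35 (Zk (6 + 4 * j)).
Proof.
apply: GZ_from; apply: GoodL_pwD.
  exact: (GoodL_scale 5 GL7).
exact: (GoodL_scale 7 (GoodL_pwM j GL5)).
Qed.

Lemma oneL_sumit (A : zmodType) (L : A -> A) j w : isadd L ->
  sumit L j w - L (sumit L j w) = w - iter j L w.
Proof.
move=> hL; elim: j => [|j IH] /=; first by rewrite (ia0 hL) !subrr.
have h2 := congr1 L IH; rewrite !(iaB hL) in h2.
by rewrite hL opprD addrACA h2 addrA subrK.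
Qed.

Fixpoint Ut (A : zmodType) (L : A -> A) n w := match n with 0 => 0 | n'.+1 => Ut L n' w + sumit L n' w end.

Lemma oneL_Ut (A : zmodType) (L : A -> A) n w : isadd L ->
  Ut L n w - L (Ut L n w) = w *+ n - sumit L n w.
Proof.
move=> hL; elim: n => [|n IH] /=; first by rewrite (ia0 hL) !subrr.
rewrite hL opprD addrACA IH oneL_sumit // mulrSr.
by rewrite -[w + L _]/(sumit L n.+1 w) (sumitS' _ _ hL) opprD addrACA.
Qed.

Lemma iter_sigma (A : zmodType) (L' : A -> A) (e : A) j z : isadd L' ->
  iter j (fun y => L' y + e) z = iter j L' z + sumit L' j e.
Proof.
move=> hL; elim: j => [|j IH] /=; first by rewrite addr0.
by rewrite IH hL -addrA (addrC _ e).
Qed.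

Definition repv k n (F : {ffun 'I_k -> 'I_n}) : Zk k := \row_j ((F j : nat)%:Z).

Section Main.
Variables (k m' : nat) (G : finZmodType).
Local Notation m := m'.+1.
Variables (L L' : Zk k -> Zk k) (psi : G -> G).
Hypotheses (hL : isadd L) (hL' : isadd L') (LK : cancel L L') (L'K : cancel L' L)
  (sL : forall x, sumit L m x = 0) (sL' : forall x, sumit L' m x = 0)
  (hpsi : isadd psi) (kpsi : forall x, psi x = 0 -> x = 0) (fpsi : forall x, iter m psi x = x -> x = 0).

Lemma psi_inj : injective psi.
Proof. move=> x y h; apply/eqP; rewrite -subr_eq0; apply/eqP/kpsi; by rewrite (iaB hpsi) h subrr. Qed.

Definition phiw (a : wr G k) : wr G k := ((fun z => psi (a.1 (L' z))), L a.2).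

Lemma phiw_aut : wr_automorphism phiw.
Proof.
have [psi' psiK psi'K] := injF_bij psi_inj.
have psi'0 : psi' 0 = 0 by rewrite -{1}(ia0 hpsi) psiK.
split.
- case=> f x [s hs]; exists (map L s) => z hz /=; rewrite /= in hs; rewrite hs ?(ia0 hpsi) //.
  apply: contra hz => h; rewrite -(L'K z); exact: map_f.
- case=> f x [g y] _ _; rewrite /phiw /wr_mul /=; congr pair; last by rewrite hL.
  by apply: functional_extensionality => z; rewrite hpsi (iaB hL') LK.
- case=> f x [g y] _ _ [] hf hx; congr pair; last exact: (can_inj LK).
  apply: functional_extensionality => w.
  by have := congr1 (fun F => F (L w)) hf; rewrite /= LK => /psi_inj.
- case=> g y [s hs]; exists ((fun w => psi' (g (L w))), L' y).
    exists (map L' s) => w hw /=; rewrite /= in hs; rewrite hs ?psi'0 //.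
    apply: contra hw => h; rewrite -(LK w); exact: map_f.
  rewrite /phiw /=; congr pair; last by rewrite L'K.
  by apply: functional_extensionality => z; rewrite L'K psi'K.
Qed.

Lemma inj_ker (A : zmodType) (g : A -> A) : isadd g -> (forall x, g x = 0 -> x = 0) -> injective g.
Proof. move=> hg kg x y h; apply/eqP; rewrite -subr_eq0; apply/eqP/kg; by rewrite (iaB hg) h subrr. Qed.

Lemma phiw_fin : finite_reidemeister phiw.
Proof.
have hI := ia_iter m hpsi.
have hchi : isadd (fun x : G => x - iter m psi x).
  by move=> u w; rewrite hI opprD addrACA.
have [chi chi0K chiK] : bijective (fun x : G => x - iter m psi x).
  apply: injF_bij; apply: inj_ker => // y /eqP; rewrite subr_eq0 => /eqP /esym; exact: fpsi.
have chi0 : chi 0 = 0 by rewrite -{1}(ia0 hchi) chi0K.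
exists #|{ffun 'I_k -> 'I_m}|, (fun i => ((fun _ => 0), repv (enum_val i))).
split; first by move=> i; exists [::].
case=> f x [s hs]; rewrite /= in hs.
set q : Zk k := \row_j ((x ord0 j) %/ m)%Z.
set r : Zk k := \row_j ((x ord0 j) %% m)%Z.
have xE : x = r + q *+ m.
  apply/matrixP => i j; rewrite [in RHS]mxE mulmxnE !mxE (ord1 i).
  by rewrite pmulrn mulrzz addrC -divz_eq.
set t := Ut L m (- q).
have tE : t - L t = (- q) *+ m by rewrite oneL_Ut // sL subr0.
set Fr : {ffun 'I_k -> 'I_m} := [ffun j => inord `|(x ord0 j %% m)%Z|%N].
exists (enum_rank Fr).
set sig := fun z => L' (z - (t + x)) + t.
set v := fun y => chi (- f (y - t)).
set h := fun z => \sum_(0 <= j < m) iter j psi (v (iter j sig z)).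
have sigE : sig = (fun y => L' y + (t - L' (t + x))).
  by apply: functional_extensionality => y; rewrite /sig (iaB hL') -addrA (addrC _ t).
have sigm : forall z, iter m sig z = z.
  by move=> z; rewrite sigE iter_sigma // sL' addr0 (sumit_iter hL' sL').
have key : forall z, h z - psi (h (sig z)) = - f (z - t).
  move=> z; rewrite /h (ia_sum hpsi).
  pose a := fun j => iter j psi (v (iter j sig z)).
  have e2 : \sum_(0 <= i < m) psi (iter i psi (v (iter i sig (sig z)))) = \sum_(0 <= i < m) a i.+1.
    by apply: eq_bigr => i _; rewrite /a [iter i.+1 sig z]iterSr.
  have e1 : \sum_(0 <= j < m) iter j psi (v (iter j sig z)) = \sum_(0 <= j < m) a j by [].
  rewrite e2 e1 -opprB -sumrB telescope_sumr // opprB /a sigm.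
  exact: (chiK (- f (z - t))).
have hv : forall y, y \notin map (fun w => w + t) s -> v y = 0.
  move=> y hy; have : y - t \notin s.
    by apply: contra hy => hyt; rewrite -(subrK t y); exact: map_f.
  by move/hs => e; rewrite /v e oppr0 chi0.
have hh : fin_supp h.
  exists [seq iter i sig w | w <- map (fun w => w + t) s, i <- iota 0 m.+1] => z hz.
  rewrite /h big1_seq // => j /andP [_]; rewrite mem_index_iota => /andP [_ ltj].
  rewrite hv ?(ia0 (ia_iter j hpsi)) //.
  apply: contra hz => hin.
  have -> : z = iter (m - j) sig (iter j sig z) by rewrite -iterD subnK ?sigm // ltnW.
  apply: (allpairs_f (fun w i => iter i sig w)) => //.
  by rewrite mem_iota /= add0n ltnS leq_subr.
exists (h, t) => //.
rewrite /wr_mul /wr_inv /phiw /=; congr pair.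
  apply: functional_extensionality => z; have kz := key z; rewrite /sig in kz.
  by rewrite (iaN hpsi) addrAC kz addNr.
rewrite enum_rankK (iaN hL) addrAC tE xE mulNrn addrC addrK.
apply/matrixP => i j; rewrite !mxE ffunE inordK.
  by rewrite gez0_abs // modz_ge0.
by rewrite -ltz_nat gez0_abs ?modz_ge0 // ltz_pmod.
Qed.
End Main.

Lemma main_abs k m (G : finZmodType) : (0 < m)%N -> GoodL m (Zk k) -> Good m G ->
  exists phi : wr G k -> wr G k, wr_automorphism phi /\ finite_reidemeister phi.
Proof.
case: m => // m' _ [L [L' [[hL hL' LK L'K] [sL sL']]]] [psi [hp kp fp]].
exists (phiw L L' psi); split; first exact: phiw_aut.
by apply: (phiw_fin (m' := m')).  
Qed.

Lemma dec23 m q d : (2 <= d)%N -> Good m (cyc_sum (nseq 2 q)) -> Good m (cyc_sum (nseq 3 q)) ->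
  Good m (cyc_sum (nseq d q)).
Proof.
move=> hd h2 h3.
have H : forall n, Good m (cyc_sum (nseq n.+2 q)) /\ Good m (cyc_sum (nseq n.+3 q)).
  elim=> [|n [IH1 IH2]]; first by split.
  split=> //; exact: (Good_nseqD h2 IH1).
by case: d hd => [|[|d]] // _; case: (H d).
Qed.

Lemma dec345 m q d : (3 <= d)%N -> Good m (cyc_sum (nseq 3 q)) -> Good m (cyc_sum (nseq 4 q)) ->
  Good m (cyc_sum (nseq 5 q)) -> Good m (cyc_sum (nseq d q)).
Proof.
move=> hd h3 h4 h5.
have H : forall n, Good m (cyc_sum (nseq n.+3 q)) /\ Good m (cyc_sum (nseq n.+4 q)) /\ Good m (cyc_sum (nseq n.+4.+1 q)).
  elim=> [|n [IH1 [IH2 IH3]]]; first by split.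
  split=> //; split=> //; exact: (Good_nseqD h3 IH1).
by case: d hd => [|[|[|d]]] // _; case: (H d).
Qed.

Lemma dec25 m q d : (2 <= d)%N -> d <> 3%N -> Good m (cyc_sum (nseq 2 q)) -> Good m (cyc_sum (nseq 5 q)) ->
  Good m (cyc_sum (nseq d q)).
Proof.
move=> hd d3 h2 h5.
have h4 : Good m (cyc_sum (nseq 4 q)) by exact: (Good_nseqD h2 h2).
have H : forall n, Good m (cyc_sum (nseq n.+4 q)) /\ Good m (cyc_sum (nseq n.+4.+1 q)).
  elim=> [|n [IH1 IH2]]; first by split.
  split=> //; exact: (Good_nseqD h2 IH1).
by case: d hd d3 => [|[|[|[|d]]]] // _ _; case: (H d).
Qed.

Lemma odd_entry m p r d : odd m -> prime p -> p <> 2%N -> (0 < r)%N -> Good m (cyc_sum (nseq d (p ^ r)%N)).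
Proof.
move=> om pp p2 r0; apply: Good_nseq1; apply: Good_neg => //; first exact: pr_gt1.
rewrite coprime_pexpr // coprime2n.
by case: (even_prime pp).
Qed.

Lemma big_entry p r d : prime p -> p <> 2%N -> p <> 3%N -> (0 < r)%N -> Good 2 (cyc_sum (nseq d (p ^ r)%N)).
Proof.
move=> pp p2 p3 r0; apply: Good_nseq1; apply: Good_two; first exact: pr_gt1.
  rewrite coprime_pexpr // coprime2n; by case: (even_prime pp).
rewrite coprime_pexpr // prime_coprime // dvdn_prime2 //.
by apply/eqP => h; apply: p3.
Qed.

Theorem theorem1 (k : nat) (G : finZmodType) (s : seq (nat * nat * nat)) :
  (1 <= k)%N ->
  pdec_wf s ->
  has_pdec G s ->
  ((forall p r d, (p, r, d) \in s -> p = 2%N \/ p = 3%N -> (2 <= d)%N) \/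
      ((forall p r d, (p, r, d) \in s -> p <> 2%N) /\ ~~ odd k) \/
      ((forall p r d, (p, r, d) \in s -> p = 2%N -> (2 <= d)%N) /\ (4 %| k)%N) \/
      ((forall p r d, (p, r, d) \in s -> p = 2%N -> (3 <= d)%N) /\ ~~ odd k)
    \/ ((forall p r d, (p, r, d) \in s -> p = 2%N -> (2 <= d)%N /\ d <> 3%N)
        /\ ~~ odd k /\ (4 <= k)%N)) ->
  exists phi : wr G k -> wr G k,
    wr_automorphism phi /\ finite_reidemeister phi.
Proof.
move=> k1 [wf _] hG Hc.
have Gs : forall m, (forall p r d, (p, r, d) \in s -> Good m (cyc_sum (nseq d (p ^ r)%N))) -> Good m G.
  move=> m H; apply: (Good_iso hG); apply: Good_flat; case=> [[p r] d] ht; exact: H.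
have ev3 : ~~ odd k -> GoodL 3 (Zk k).
  move=> ek; have -> : k = (2 * (k %/ 2))%N.
    by move: ek; rewrite -dvdn2 => ek; lia.
  exact: GZ3.
have ev5 : (4 %| k)%N -> GoodL 5 (Zk k).
  move=> ek; have -> : k = (4 * (k %/ 4))%N by lia.
  exact: GZ5.
have ent5 : (forall p r d, (p, r, d) \in s -> p = 2%N -> (2 <= d)%N) ->
    forall p r d, (p, r, d) \in s -> Good 5 (cyc_sum (nseq d (p ^ r)%N)).
  move=> H p r d ht; have [pp r0 _] := wf p r d ht.
  case: (p =P 2%N) => [p2 | np2]; last exact: odd_entry.
  rewrite p2 in ht *; apply: dec23 (H _ _ _ ht erefl) _ _.
    exact: GB2.
  exact: GB3.
case: Hc => [H1 | [[H2 ek] | [[H3 k4] | [[H4 ek] | [H5 [ek k4]]]]]].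
- apply: (main_abs (m := 2)) => //; first exact: GoodL2.
  apply: Gs => p r d ht; have [pp r0 _] := wf p r d ht.
  case: (p =P 2%N) => [p2 | np2].
    rewrite p2 in ht *; apply: dec23 (H1 _ _ _ ht (or_introl erefl)) _ _.
      exact: GB2.
    exact: GB3.
  case: (p =P 3%N) => [p3 | np3]; last exact: big_entry.
  rewrite p3 in ht *; apply: dec23 (H1 _ _ _ ht (or_intror erefl)) _ _.
    exact: GB2.
  exact: GB3.
- apply: (main_abs (m := 3)) => //; first exact: ev3.
  apply: Gs => p r d ht; have [pp r0 _] := wf p r d ht.
  exact: odd_entry (H2 _ _ _ ht) r0.
- apply: (main_abs (m := 5)) => //; first exact: ev5.
  apply: Gs; exact: ent5.
- apply: (main_abs (m := 3)) => //; first exact: ev3.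
  apply: Gs => p r d ht; have [pp r0 _] := wf p r d ht.
  case: (p =P 2%N) => [p2 | np2]; last exact: odd_entry.
  rewrite p2 in ht *; apply: dec345 (H4 _ _ _ ht erefl) _ _ _.
  + exact: GB3.
  + exact: GB4.
  + exact: GB5.
- case/boolP: (4 %| k)%N => [k4' | nk4].
    apply: (main_abs (m := 5)) => //; first exact: ev5.
    apply: Gs; apply: ent5 => p r d ht p2; exact: (H5 _ _ _ ht p2).1.
  apply: (main_abs (m := 35)) => //.
    have -> : k = (6 + 4 * ((k - 6) %/ 4))%N.
      by move: ek; rewrite -dvdn2 => ek; lia.
    exact: GZ35.
  apply: Gs => p r d ht; have [pp r0 _] := wf p r d ht.
  case: (p =P 2%N) => [p2 | np2]; last exact: odd_entry.
  rewrite p2 in ht *; have [d2 d3] := H5 _ _ _ ht erefl.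
  apply: dec25 d2 d3 _ _.
    exact: GB2.
  exact: GB5.
Qed.
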